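(* Let $P$ be a poset with an $\mathbb{R}$-action $\Lambda$. Let $I,J$ be intervals of $P$ and $\epsilon\ge0$ with $I\subseteq\mathrm{Ex}^\Lambda_\epsilon(J)$ and $J\subseteq\mathrm{Ex}^\Lambda_\epsilon(I)$. Then: - $\Omega(I,\Lambda_{-\epsilon}(J))$ equals the set of all connected components of $I\cap\Lambda_{-\epsilon}(J)$; - $\Omega(J,\Lambda_{-\epsilon}(I))$ equals the set of all connected components of $J\cap\Lambda_{-\epsilon}(I)$.
   Context: An interval of a poset $P$ is a nonempty subset that is convex ($p,q\in I$, $p\le r\le q$ imply $r\in I$) and connected (any two elements are joined by a finite sequence of elements of the subset with consecutive ones comparable). Connected components of a subset are its maximal connected subsets in this sense. For $A\subseteq P$ nonempty, $A^\uparrow=\{p:\exists a\in A,\ a\le p\}$ and $A^\downarrow=\{p:\exists a\in A,\ p\le a\}$; $\emptyset^\uparrow=\emptyset^\downarrow=P$. An $\mathbb{R}$-action on $P$ is a family $\{\Lambda_\epsilon\}_{\epsilon\ge0}$ of poset automorphisms with $p\le\Lambda_\epsilon(p)$, $\Lambda_0=\mathrm{id}$ and $\Lambda_\epsilon\Lambda_\zeta=\Lambda_{\epsilon+\zeta}$. Write $\Lambda_{-\epsilon}=\Lambda_\epsilon^{-1}$, and $\Lambda_{-\epsilon}(J)$ for the image of $J$. $\mathrm{Ex}^\Lambda_\epsilon(A)=\Lambda_\epsilon^{-1}(A)^\uparrow\cap\Lambda_\epsilon(A)^\downarrow$, where $\Lambda_\epsilon^{-1}(A)$ is the preimage. For intervals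 $I,J$, $\Omega(I,J)$ is the set of connected components $C$ of $I\cap J$ satisfying $I\cap C^\downarrow\subseteq C$ and $J\cap C^\uparrow\subseteq C$. *)

(* Defs.v *)
From HB Require Import structures.
From mathcomp Require Import all_boot all_order all_algebra.
From mathcomp Require Import boolp classical_sets reals.
Set Implicit Arguments. Unset Strict Implicit. Unset Printing Implicit Defensive.
Import Order.TTheory GRing.Theory Num.Theory.
Local Open Scope classical_set_scope.

Section PosetDefs.
Context {d : Order.disp_t} {P : porderType d}.
Local Open Scope order_scope.

Definition comparableP (p q : P) : Prop := p <= q \/ q <= p.

Inductive zigzag (A : set P) : P -> P -> Prop :=
| zz_refl p : A p -> zigzag A p p
| zz_step p q r : zigzag A p q -> A r -> comparableP q r -> zigzag A p r.

Definition connectedP (A : set P) : Prop :=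
  forall p q, A p -> A q -> zigzag A p q.

Definition convexP (A : set P) : Prop :=
  forall p q r, A p -> A q -> p <= r -> r <= q -> A r.

Definition is_interval (I : set P) : Prop :=
  I !=set0 /\ convexP I /\ connectedP I.

Definition components (S : set P) : set (set P) :=
  [set C | C !=set0 /\ C `<=` S /\ connectedP C /\
           forall D, C `<=` D -> D `<=` S -> connectedP D -> D = C].

(* up- and down-closures, with the convention empty^up = empty^down = P *)
Definition upset (A : set P) : set P :=
  [set p | (A = set0) \/ exists2 a, A a & a <= p].
Definition downset (A : set P) : set P :=
  [set p | (A = set0) \/ exists2 a, A a & p <= a].

Definition is_poset_automorphism (f : P -> P) : Prop :=
  bijective f /\ forall p q, (f p <= f q) <-> (p <= q).

(* An R-action: a family Lam e (e >= 0) of poset automorphisms; the values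
   of Lam at negative arguments are irrelevant. *)
Definition R_action {R : realType} (Lam : R -> P -> P) : Prop :=
  (forall e, (0 <= e)%R -> is_poset_automorphism (Lam e)) /\
  (forall e p, (0 <= e)%R -> p <= Lam e p) /\
  (forall p, Lam 0%R p = p) /\
  (forall e z p, (0 <= e)%R -> (0 <= z)%R -> Lam e (Lam z p) = Lam (e + z)%R p).

(* Lam_{-e}(J) = image of J under (Lam e)^{-1} = preimage of J under Lam e *)
Definition Lam_neg {R : realType} (Lam : R -> P -> P) (e : R) (J : set P) : set P :=
  Lam e @^-1` J.

Definition Ex {R : realType} (Lam : R -> P -> P) (e : R) (A : set P) : set P :=
  upset (Lam e @^-1` A) `&` downset (Lam e @` A).

Definition Omega (I J : set P) : set (set P) :=
  [set C | components (I `&` J) C /\ I `&` downset C `<=` C /\ J `&` upset C `<=` C].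

End PosetDefs.

(* Main.v *)
Require Import Defs.
From HB Require Import structures.
From mathcomp Require Import all_boot all_order all_algebra.
From mathcomp Require Import boolp classical_sets reals.
Local Open Scope classical_set_scope.

Set Implicit Arguments.
Section Aux.
Context {d : Order.disp_t} {P : porderType d}.
Local Open Scope order_scope.

Lemma zz_start (A : set P) p q : zigzag A p q -> A p.
Proof. by elim. Qed.

Lemma zz_end (A : set P) p q : zigzag A p q -> A q.
Proof. by case. Qed.

Lemma zz_mono (A B : set P) p q : A `<=` B -> zigzag A p q -> zigzag B p q.
Proof.
move=> AB; elim=> [x Ax|x y z _ IH Az c]; first by apply: zz_refl; apply: AB.
by apply: zz_step IH (AB _ Az) c.
Qed.

Lemma zz_cat (A : set P) p q r : zigzag A p q -> zigzag A q r -> zigzag A p r.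
Proof.
move=> H1 H2; elim: H2 H1 => [//|x y z _ IH Az c H1].
exact: zz_step (IH H1) Az c.
Qed.

Lemma zz_sym (A : set P) p q : zigzag A p q -> zigzag A q p.
Proof.
elim=> [x Ax|x y z H IH Az c]; first exact: zz_refl.
apply: (@zz_cat A z y x _ IH).
apply: (zz_step (zz_refl Az) (zz_end H)).
by case: c; [right|left].
Qed.

Lemma comp_add (S C : set P) p c :
  components S C -> C c -> S p -> comparableP c p -> C p.
Proof.
move=> [_ [CS [Cc Cmax]]] cc Sp cp.
have E : C `|` [set p] = C.
  apply: Cmax; first by move=> x Cx; left.
    by move=> x [Cx|->]; [apply: CS|].
  have toc : forall x, (C `|` [set p]) x -> zigzag (C `|` [set p]) x c.
    move=> x [Cx|->].
      by apply: zz_mono (Cc _ _ Cx cc); move=> y Cy; left.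
    apply: zz_step (zz_refl _) _ _; first by right.
      by left.
    by case: cp; [right|left].
  move=> x y Hx Hy; apply: zz_cat (toc _ Hx) _; exact: zz_sym (toc _ Hy).
by rewrite -E; right.
Qed.

Lemma main_aux (R : realType) (Lam : R -> P -> P) (I J : set P) (e : R) :
  (forall p q, (Lam e p <= Lam e q) <-> (p <= q)) ->
  convexP I -> convexP J ->
  I `<=` Ex Lam e J -> J `<=` Ex Lam e I ->
  Omega I (Lam_neg Lam e J) = components (I `&` Lam_neg Lam e J).
Proof.
move=> mono cI cJ IJ JI.
apply/seteqP; split; first by move=> C [].
move=> C HC; split; first by [].
have [[c0 Cc0] [CS _]] := HC.
split.
- move=> p [Ip [C0|[c Cc pc]]]; first by move: Cc0; rewrite C0.
  have [Ic Kc] := CS _ Cc.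
  apply: comp_add HC Cc _ _; last by right.
  split=> //.
  have [[E0|[a Ka ap]] _] := IJ _ Ip.
    by move: Kc; rewrite /Lam_neg E0.
  rewrite /Lam_neg /=.
  apply: (cJ (Lam e a) (Lam e c)) => //; by apply/mono.
- move=> q [Kq [C0|[c Cc cq]]]; first by move: Cc0; rewrite C0.
  have [Ic Kc] := CS _ Cc.
  apply: comp_add HC Cc _ _; last by left.
  split=> //.
  have [_ [E0|[a [i Ii <-] ai]]] := JI _ Kq.
    have Hc : (Lam e @` I) (Lam e c) by exists c.
    by move: Hc; rewrite E0.
  apply: (cI c i) => //; by apply/mono.
Qed.
End Aux.

Theorem lemma2p15 (d : Order.disp_t) (P : porderType d) (R : realType)
  (Lam : R -> P -> P) (I J : set P) (e : R) :
  R_action Lam -> is_interval I -> is_interval J -> (0 <= e)%R ->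
  I `<=` Ex Lam e J -> J `<=` Ex Lam e I ->
  Omega I (Lam_neg Lam e J) = components (I `&` Lam_neg Lam e J) /\
  Omega J (Lam_neg Lam e I) = components (J `&` Lam_neg Lam e I).
Proof.
move=> [aut _] [_ [cI _]] [_ [cJ _]] e0 IJ JI.
have [_ mono] := aut e e0.
split; exact: main_aux.
Qed.
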